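(* Let $E,F,G$ be finite-dimensional Hilbert spaces with fixed orthonormal bases, and set $R=E$, $S=F\otimes G$, $A=E\otimes F$, $B=G$, so that $R\otimes S=A\otimes B=E\otimes F\otimes G$. Let $U$ be any unitary on $E\otimes F\otimes G$, let $|0\rangle\in R$ be a fixed basis vector, and define channels from $S$ to $A$ by $$\mathcal N(\rho)=\operatorname{Tr}_B\big[U(|0\rangle\langle 0|^R\otimes\rho)U^\dagger\big],\qquad \bar{\mathcal N}(\rho)=\operatorname{Tr}_B\big[\bar U(|0\rangle\langle 0|^R\otimes\rho)U^T\big],$$ where $\bar U$ is the entrywise complex conjugate of $U$ in the product basis and $U^T$ its transpose. Let $S_1,S_2$ be two copies of $S$ and $|\Phi\rangle^{S_1S_2}=|S|^{-1/2}\sum_{i}|i\rangle|i\rangle$ the maximally entangled state in the fixed basis. Then the state $(\mathcal N\otimes\bar{\mathcal N})(|\Phi\rangle\langle\Phi|^{S_1S_2})$ on $A_1\otimes A_2$ has an eigenvalue at least $$\frac{|S|}{|A||B|}=\frac{1}{|E|}.$$ More precisely, $\langle\Phi|^{A_1A_2}(\mathcal N\otimes\bar{\mathcal N})(\Phi^{S_1S_2})|\Phi\rangle^{A_1A_2}\ge 1/|E|$, where $|\Phi\rangle^{A_1A_2}$ is the maximally entangled state on two copies of $A$ in the fixed basis.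
   Context: $|X|$ denotes the dimension of $X$. Here $\mathcal N$ acts on $S_1$ with output $A_1$ (using $U$ on $E_1F_1G_1$) and $\bar{\mathcal N}$ acts on $S_2$ with output $A_2$ (using $\bar U$ on $E_2F_2G_2$). *)

(* Defs.v *)
(* Operators on finite-dimensional Hilbert spaces with a fixed
   orthonormal basis indexed by a finType T are written as matrices T -> T -> C,
   where C is an arbitrary numClosedFieldType (e.g. algC). *)
From HB Require Import structures.
From mathcomp Require Import all_boot all_order all_algebra.
Set Implicit Arguments. Unset Strict Implicit. Unset Printing Implicit Defensive.
Import Order.TTheory GRing.Theory Num.Theory.
Local Open Scope ring_scope.

Section QInfo.
Variable C : numClosedFieldType.

Definition op (T : finType) := T -> T -> C.
Definition vect (T : finType) := T -> C.

Definition id_op (T : finType) : op T := fun i j => (i == j)%:R.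
Definition mulop (T : finType) (X Y : op T) : op T :=
  fun i j => \sum_(k : T) X i k * Y k j.
Definition adj (T : finType) (X : op T) : op T := fun i j => (X j i)^*.
Definition conjop (T : finType) (X : op T) : op T := fun i j => (X i j)^*.
Definition trop (T : finType) (X : op T) : op T := fun i j => X j i.

Definition unitary (T : finType) (U : op T) : Prop :=
  (forall i j, mulop U (adj U) i j = @id_op T i j) /\
  (forall i j, mulop (adj U) U i j = @id_op T i j).

Definition ptrace2 (T1 T2 : finType) (X : op (T1 * T2)%type) : op T1 :=
  fun i j => \sum_(k : T2) X (i, k) (j, k).

Definition kron (T1 T2 : finType) (X : op T1) (Y : op T2) : op (T1 * T2)%type :=
  fun x y => X x.1 y.1 * Y x.2 y.2.

Definition unit_op (T : finType) (i j : T) : op T :=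
  fun x y => ((x == i) && (y == j))%:R.

(* tensor product N1 (x) N2 of two linear maps on operators, defined by
   linearity from its action on product matrix units *)
Definition tensor_map (S1 S2 A1 A2 : finType)
  (N1 : op S1 -> op A1) (N2 : op S2 -> op A2) (X : op (S1 * S2)%type) : op (A1 * A2)%type :=
  fun x y => \sum_(p : S1 * S2) \sum_(q : S1 * S2)
     X p q * kron (N1 (unit_op p.1 q.1)) (N2 (unit_op p.2 q.2)) x y.

(* |0><0|^R (x) rho, with R = E, S = F (x) G, viewed on E (x) F (x) G
   (basis index ((e, f), g)) *)
Definition embed0 (E F G : finType) (e0 : E) (rho : op (F * G)%type) : op (E * F * G)%type :=
  fun x y => ((x.1.1 == e0) && (y.1.1 == e0))%:R * rho (x.1.2, x.2) (y.1.2, y.2).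

Definition chanN (E F G : finType) (U : op (E * F * G)%type) (e0 : E)
  (rho : op (F * G)%type) : op (E * F)%type :=
  ptrace2 (mulop U (mulop (embed0 e0 rho) (adj U))).

Definition chanNbar (E F G : finType) (U : op (E * F * G)%type) (e0 : E)
  (rho : op (F * G)%type) : op (E * F)%type :=
  ptrace2 (mulop (conjop U) (mulop (embed0 e0 rho) (trop U))).

Definition maxent (T : finType) : vect (T * T)%type :=
  fun p => (p.1 == p.2)%:R / sqrtC (#|T|%:R).

Definition proj (T : finType) (v : vect T) : op T := fun x y => v x * (v y)^*.

Definition expect (T : finType) (v : vect T) (X : op T) : C :=
  \sum_(x : T) \sum_(y : T) (v x)^* * X x y * v y.

End QInfo.

(* Main.v *)
Require Import Defs.
From HB Require Import structures.
From mathcomp Require Import all_boot all_order all_algebra.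
Import Order.TTheory GRing.Theory Num.Theory.
Local Open Scope ring_scope.

Lemma ac4 (R:comNzRingType) (a c x b k : R) : a*c*x*(b*k) = a*(b*(k*c*x)).
Proof. rewrite -!mulrA; congr (a * _). rewrite mulrCA mulrC -!mulrA mulrCA; congr (b*_); exact: mulrCA. Qed.

Lemma sum_pair_diag (C : numClosedFieldType) (T : finType) (h : T * T -> C) :
  \sum_(p : T * T) (p.1 == p.2)%:R * h p = \sum_i h (i, i).
Proof.
rewrite (eq_bigr (fun p => (p.1 == p.2)%:R * h (p.1, p.2))); last by case.
rewrite -(pair_big predT predT (fun i j => (i == j)%:R * h (i, j))) /=.
apply: eq_bigr => i _; rewrite (bigD1 i) //= eqxx mul1r big1 ?addr0 //.
by move=> j; rewrite eq_sym => /negbTE ->; rewrite mul0r.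
Qed.

Lemma core (C : numClosedFieldType) (T : finType) (f : T * T -> T * T -> C) :
  \sum_(p : T * T) \sum_(q : T * T) (p.1 == p.2)%:R * ((q.1 == q.2)%:R * f p q)
  = \sum_i \sum_j f (i, i) (j, j).
Proof.
under eq_bigr do rewrite -mulr_sumr.
rewrite sum_pair_diag; apply: eq_bigr => i _.
exact: sum_pair_diag.
Qed.

Lemma kk (C : numClosedFieldType) (T : finType) :
  (sqrtC (#|T|%:R : C))^-1 * ((sqrtC (#|T|%:R : C))^-1)^* = (#|T|%:R)^-1.
Proof.
rewrite fmorphV /=. rewrite (conj_Creal (sqrtC_real (@ler0n C #|T|))) -invfM -expr2 sqrtCK //.
Qed.

Lemma maxentE (C : numClosedFieldType) (T : finType) (p : T * T) :
  @maxent C T p = (p.1 == p.2)%:R * (sqrtC (#|T|%:R : C))^-1.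
Proof. by []. Qed.

Lemma expect_maxent (C : numClosedFieldType) (T : finType) (X : op C (T * T)%type) :
  expect (@maxent C T) X = (#|T|%:R)^-1 * \sum_i \sum_j X (i, i) (j, j).
Proof.
rewrite -kk /expect.
set k := (sqrtC _)^-1.
transitivity (\sum_(p : T * T) \sum_(q : T * T) (p.1 == p.2)%:R * ((q.1 == q.2)%:R * (k * k^* * X p q))).
  apply: eq_bigr => p _; apply: eq_bigr => q _.
  rewrite !maxentE rmorphM rmorph_nat -/k /=.
  move: (k^*) ((p.1 == p.2)%:R) ((q.1 == q.2)%:R) (X p q) => c a b x.
  exact: ac4.
rewrite (@core C T (fun p q => k * k^* * X p q)) mulr_sumr; apply: eq_bigr => i _.
by rewrite mulr_sumr.
Qed.

Definition ww (E F G : finType) (e0 : E) (s : (F * G)%type) : (E * F * G)%type :=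
  ((e0, s.1), s.2).
Arguments ww [E F G].

Lemma sum_delta (C : numClosedFieldType) (T : finType) (j : T) (f : T -> C) :
  \sum_i (i == j)%:R * f i = f j.
Proof.
rewrite (bigD1 j) //= eqxx mul1r big1 ?addr0 // => i /negbTE ->; exact: mul0r.
Qed.

Lemma embed0_unit (C : numClosedFieldType) (E F G : finType) (e0 : E)
  (s s' : (F * G)%type) (k l : (E * F * G)%type) :
  embed0 e0 (@unit_op C _ s s') k l = (k == ww e0 s)%:R * (l == ww e0 s')%:R.
Proof.
case: k => [[k1 k2] k3]; case: l => [[l1 l2] l3]; case: s => s1 s2; case: s' => t1 t2.
rewrite /embed0 /unit_op /ww /= !xpair_eqE.
by case: (k1 == e0); case: (l1 == e0); case: (k2 == s1); case: (k3 == s2);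
  case: (l2 == t1); case: (l3 == t2); rewrite /= ?mul0r ?mulr0 ?mul1r.
Qed.

Lemma chanN_unit (C : numClosedFieldType) (E F G : finType) (e0 : E)
  (U : op C (E * F * G)%type) (s s' : (F * G)%type) (a a' : (E * F)%type) :
  chanN U e0 (@unit_op C _ s s') a a' =
  \sum_g U (a, g) (ww e0 s) * (U (a', g) (ww e0 s'))^*.
Proof.
rewrite /chanN /ptrace2 /mulop; apply: eq_bigr => g _.
under eq_bigr => k _ do under eq_bigr => l _ do rewrite embed0_unit -mulrA.
under eq_bigr => k _ do rewrite -mulr_sumr sum_delta mulrCA.
by rewrite sum_delta.
Qed.

Lemma chanNbar_unit (C : numClosedFieldType) (E F G : finType) (e0 : E)
  (U : op C (E * F * G)%type) (s s' : (F * G)%type) (a a' : (E * F)%type) :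
  chanNbar U e0 (@unit_op C _ s s') a a' =
  \sum_g (U (a, g) (ww e0 s))^* * U (a', g) (ww e0 s').
Proof.
rewrite /chanNbar /ptrace2 /mulop; apply: eq_bigr => g _.
under eq_bigr => k _ do under eq_bigr => l _ do rewrite embed0_unit -mulrA.
under eq_bigr => k _ do rewrite -mulr_sumr sum_delta mulrCA.
by rewrite sum_delta.
Qed.

Lemma reorder (C : numClosedFieldType) (A S G : finType) (W : A -> G -> S -> C) :
  \sum_a \sum_a' \sum_s \sum_s'
     ((\sum_g W a g s * (W a' g s')^*) * (\sum_h (W a h s)^* * W a' h s'))
  = \sum_g \sum_h (\sum_a \sum_s W a g s * (W a h s)^*) *
                  (\sum_a \sum_s W a g s * (W a h s)^*)^*.
Proof.
pose X a a' s s' g h := W a g s * (W a' g s')^* * ((W a h s)^* * W a' h s').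
transitivity (\sum_a \sum_a' \sum_s \sum_s' \sum_g \sum_h X a a' s s' g h).
  apply: eq_bigr => a _; apply: eq_bigr => a' _; apply: eq_bigr => s _; apply: eq_bigr => s' _.
  rewrite mulr_suml; apply: eq_bigr => g _; rewrite mulr_sumr //.
transitivity (\sum_g \sum_h \sum_a \sum_s \sum_a' \sum_s' X a a' s s' g h); last first.
  apply: eq_bigr => g _; apply: eq_bigr => h _.
  rewrite rmorph_sum mulr_suml; apply: eq_bigr => a _.
  rewrite mulr_suml; apply: eq_bigr => s _.
  rewrite mulr_sumr; apply: eq_bigr => a' _.
  rewrite rmorph_sum mulr_sumr; apply: eq_bigr => s' _.
  by rewrite /X rmorphM /= conjCK mulrACA.
under eq_bigr => a _ do rewrite exchange_big.
under eq_bigr => a _ do under eq_bigr => s _ do under eq_bigr => a' _ do rewrite exchange_big.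
under eq_bigr => a _ do under eq_bigr => s _ do rewrite exchange_big.
under eq_bigr => a _ do rewrite exchange_big.
rewrite exchange_big.
under eq_bigr => g _ do under eq_bigr => a _ do under eq_bigr => s _ do under eq_bigr => a' _ do rewrite exchange_big.
under eq_bigr => g _ do under eq_bigr => a _ do under eq_bigr => s _ do rewrite exchange_big.
under eq_bigr => g _ do under eq_bigr => a _ do rewrite exchange_big.
under eq_bigr => g _ do rewrite exchange_big.
by [].
Qed.

Lemma diag_le (C : numClosedFieldType) (G : finType) (M : G -> G -> C) :
  \sum_g M g g * (M g g)^* <= \sum_g \sum_h M g h * (M g h)^*.
Proof.
apply: ler_sum => g _; rewrite (bigD1 g) //=.
by apply: ler_wpDr => //; apply: sumr_ge0 => h _; exact: mul_conjC_ge0.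
Qed.

Lemma cs (C : numClosedFieldType) (G : finType) (x : G -> C) (t : C) :
  (0 < #|G|)%N -> (forall g, x g \is Num.real) -> \sum_g x g = t ->
  t ^+ 2 / #|G|%:R <= \sum_g x g ^+ 2.
Proof.
move=> hG hr ht.
have Nn0 : (#|G|%:R : C) != 0 by rewrite pnatr_eq0 -lt0n.
have tr : t \is Num.real by rewrite -ht; apply: rpred_sum => g _; exact: hr.
set m := t / #|G|%:R.
have mr : m \is Num.real by rewrite /m rpredM // rpredV rpred_nat.
have h : 0 <= \sum_g (x g - m) ^+ 2.
  by apply: sumr_ge0 => g _; rewrite -realEsqr rpredB.
rewrite (eq_bigr (fun g => x g ^+ 2 - (x g * m) *+ 2 + m ^+ 2)) in h; last first.
  by move=> g _; rewrite sqrrB.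
rewrite big_split /= sumrB sumrMnl -mulr_suml ht sumr_const in h.
have e : m ^+ 2 *+ #|G| = t * m.
  by rewrite -mulr_natr expr2 -mulrA /m divfK // mulrC.
rewrite e mulr2n opprD addrA addrNK subr_ge0 in h.
by rewrite expr2 -mulrA.
Qed.

Lemma final_bound (C : numClosedFieldType) (G : finType) (M : G -> G -> C) (n : nat) :
  (0 < #|G|)%N -> (forall g, 0 <= M g g) -> \sum_g M g g = n%:R ->
  (n%:R : C) ^+ 2 / #|G|%:R <= \sum_g \sum_h M g h * (M g h)^*.
Proof.
move=> hG hp hs; apply: le_trans; last exact: diag_le.
rewrite (eq_bigr (fun g => M g g ^+ 2)) => [|g _]; last first.
  by rewrite expr2 conj_Creal // ger0_real.
by apply: cs => // g; exact: ger0_real.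
Qed.

Lemma ac5 (R:comNzRingType) (a k b c K : R) : a*k*(b*c)*K = a*(b*(k*c*K)).
Proof. rewrite -!mulrA; congr (a * _); rewrite mulrCA; congr (b * _); by rewrite mulrA. Qed.

Lemma tensor_maxent (C : numClosedFieldType) (S A1 A2 : finType)
  (N1 : op C S -> op C A1) (N2 : op C S -> op C A2) (x y : (A1 * A2)%type) :
  tensor_map N1 N2 (proj (@maxent C S)) x y =
  (#|S|%:R)^-1 * \sum_i \sum_j kron (N1 (@unit_op C _ i j)) (N2 (@unit_op C _ i j)) x y.
Proof.
rewrite -kk /tensor_map.
set k := (sqrtC _)^-1.
pose K (p q : (S * S)%type) := kron (N1 (@unit_op C _ p.1 q.1)) (N2 (@unit_op C _ p.2 q.2)) x y.
transitivity (\sum_(p : S * S) \sum_(q : S * S) (p.1 == p.2)%:R * ((q.1 == q.2)%:R * (k * k^* * K p q))).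
  apply: eq_bigr => p _; apply: eq_bigr => q _.
  rewrite /proj !maxentE rmorphM rmorph_nat -/k /K /=.
  move: (k^*) ((p.1 == p.2)%:R) ((q.1 == q.2)%:R) (K p q) => c a b z.
  exact: (@ac5 C a k b c).
rewrite (@core C S (fun p q => k * k^* * K p q)) mulr_sumr; apply: eq_bigr => i _.
by rewrite mulr_sumr.
Qed.

Theorem lemma2 (C : numClosedFieldType) (E F G : finType) (e0 : E)
  (hF : (0 < #|F|)%N) (hG : (0 < #|G|)%N)
  (U : op C (E * F * G)%type) (hU : unitary U) :
  (#|E|%:R)^-1 <=
    expect (@maxent C (E * F)%type)
      (tensor_map (chanN U e0) (chanNbar U e0) (proj (@maxent C (F * G)%type))).
Proof.
rewrite expect_maxent.
under eq_bigr => a _ do under eq_bigr => a' _ do rewrite tensor_maxent /kron /=.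
under eq_bigr => a _ do under eq_bigr => a' _ do under eq_bigr => s _ do
  under eq_bigr => s' _ do rewrite chanN_unit chanNbar_unit.
under eq_bigr => a _ do rewrite -mulr_sumr.
rewrite -mulr_sumr.
rewrite (@reorder C _ _ _ (fun a g s => U (a, g) (ww e0 s))).
have hpos : forall g, 0 <= \sum_a \sum_s U (a, g) (ww e0 s) * (U (a, g) (ww e0 s))^*.
  by move=> g; apply: sumr_ge0 => a _; apply: sumr_ge0 => s _; exact: mul_conjC_ge0.
have hsum : \sum_g \sum_a \sum_s U (a, g) (ww e0 s) * (U (a, g) (ww e0 s))^* = (#|((F * G)%type : finType)|%:R : C).
  rewrite exchange_big pair_bigA /= exchange_big /=.
  transitivity (\sum_(s : F * G) (1 : C)); last by rewrite sumr_const.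
  apply: eq_bigr => s _.
  have := (proj2 hU) (ww e0 s) (ww e0 s).
  rewrite /mulop /adj /id_op eqxx /= mulr1n => <-.
  by apply: eq_bigr => [[a g]] _ /=; exact: mulrC.
have hb := @final_bound C G (fun g h => \sum_a \sum_s U (a, g) (ww e0 s) * (U (a, h) (ww e0 s))^*) _ hG hpos hsum.
have hF0 : (#|F|%:R : C) != 0 by rewrite pnatr_eq0 -lt0n.
have hG0 : (#|G|%:R : C) != 0 by rewrite pnatr_eq0 -lt0n.
have hE0 : (#|E|%:R : C) != 0 by rewrite pnatr_eq0 -lt0n; apply/card_gt0P; exists e0.
apply: le_trans (ler_wpM2l _ (ler_wpM2l _ hb)); last 2 first.
- by rewrite invr_ge0 ler0n.
- by rewrite invr_ge0 ler0n.
rewrite [X in _ <= X](_ : _ = #|E|%:R^-1) //.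
rewrite !card_prod !natrM expr2 -mulrA mulKf ?mulf_neq0 // mulfK // invfM -mulrA mulVf ?mulr1 //.
Qed.
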